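(* Let $\varphi:\mathrm{WCQSym}\to\mathrm{QSym}$ be the $\mathbf k$-linear map with $\varphi(M_\alpha)=(-1)^{\ell_\varepsilon(\alpha)}M_{\bar\alpha}$ for $\alpha\in\mathcal C_N$ and $\varphi(M_\alpha)=0$ for $\alpha\in\mathcal C_\varepsilon$. Let $B_\varepsilon=\{M_\alpha:\alpha\in\mathcal C_\varepsilon\}$ and $B_N=\{M_\alpha+(-1)^{\ell_\varepsilon(\alpha)+1}M_{\bar\alpha}:\alpha\in\mathcal C_N\setminus\mathcal C(\mathbb N)\}$. Then the disjoint union $B_\varepsilon\uplus B_N$ is a basis of the free $\mathbf k$-module $\ker\varphi$.
   Context: $\mathbf{k}$ is a commutative ring containing $\mathbb{Q}$. $\tilde{\mathbb N}=\mathbb N\cup\{\varepsilon\}$ with $0+\varepsilon=\varepsilon+\varepsilon=\varepsilon$ and $n+\varepsilon=n$ for integers $n\ge1$. $\mathbf{k}[[X]]_{\tilde{\mathbb N}}$, $X=\{x_1<x_2<\cdots\}$, is the algebra of possibly infinite linear combinations of formal monomials $\prod x_i^{f(x_i)}$, $f$ finitely supported $\tilde{\mathbb N}$-valued, multiplied by adding exponents in $\tilde{\mathbb N}$. An $\tilde{\mathbb N}$-composition is a finite (possibly empty) sequence $\alpha=(\alpha_1,\dots,\alpha_k)$ of elements of $\{\varepsilon,1,2,\dots\}$; $M_\alpha=\sum_{1\le i_1<\cdots<i_k}x_{i_1}^{\alpha_1}\cdots x_{i_k}^{\alpha_k}$, $M_\emptyset=1$. $\mathrm{WCQSym}$ is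 the $\mathbf k$-span of the (linearly independent) $M_\alpha$. $\mathcal C(\mathbb N)$ is the set of $\tilde{\mathbb N}$-compositions all of whose entries are positive integers, and $\mathrm{QSym}$ is the span of $M_\alpha$, $\alpha\in\mathcal C(\mathbb N)$. $\ell_\varepsilon(\alpha)$ is the number of entries of $\alpha$ equal to $\varepsilon$; $\bar\alpha$ is $\alpha$ with its $\varepsilon$ entries deleted. $\mathcal C_\varepsilon$ is the set of $\tilde{\mathbb N}$-compositions with first entry $\varepsilon$; $\mathcal C_N$ is the set of all others (including the empty one). *)

(* Defs.v *)
From HB Require Import structures.
From mathcomp Require Import all_boot all_order all_algebra.
From mathcomp Require Import finmap.
From mathcomp.multinomials Require Import monalg.
Set Implicit Arguments. Unset Strict Implicit. Unset Printing Implicit Defensive.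
Import GRing.Theory.
Local Open Scope ring_scope.

(* Ñ-compositions: an entry 0 encodes ε, an entry n >= 1 encodes the
   positive integer n.  This is a bijection {ε,1,2,...} <-> nat. *)
Definition wcomp := seq nat.

Definition eps_len (a : wcomp) : nat := count (pred1 0%N) a.
Definition bar (a : wcomp) : wcomp := filter (fun x => x != 0%N) a.
Definition in_Ceps (a : wcomp) : bool :=
  if a is 0%N :: _ then true else false.
Definition in_CN (a : wcomp) : bool := ~~ in_Ceps a.
Definition in_CNat (a : wcomp) : bool := all (fun x => 0 < x)%N a.

(* WCQSym: the free k-module with basis (M_α)_α (the M_α being linearly
   independent, WCQSym is identified with the free module on Ñ-compositions);
   QSym is the submodule spanned by the M_α, α ∈ C(N). *)
Definition WCQSym (k : nzRingType) := {malg k[wcomp]}.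
Definition M (k : nzRingType) (a : wcomp) : WCQSym k := << a >>.

Definition phiM (k : nzRingType) (a : wcomp) : WCQSym k :=
  if in_CN a then (-1) ^+ eps_len a *: M k (bar a) else 0.
(* the k-linear extension φ : WCQSym -> QSym (viewed inside WCQSym) *)
Definition phi (k : nzRingType) (v : WCQSym k) : WCQSym k :=
  \sum_(a <- msupp v) v@_a *: phiM k a.

Definition ker_phi (k : nzRingType) : pred (WCQSym k) := fun v => phi v == 0.

Definition basis_index (a : wcomp) : bool :=
  in_Ceps a || (in_CN a && ~~ in_CNat a).
Definition basis_vec (k : nzRingType) (a : wcomp) : WCQSym k :=
  if in_Ceps a then M k a
  else M k a + (-1) ^+ (eps_len a).+1 *: M k (bar a).

Definition is_basis_of (k : nzRingType) (V : lmodType k) (U : pred V)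
    (I : eqType) (J : pred I) (b : I -> V) : Prop :=
  [/\ forall i, J i -> U (b i),
      forall (s : seq I) (c : I -> k), uniq s -> all J s ->
        \sum_(i <- s) c i *: b i = 0 -> forall i, i \in s -> c i = 0
    & forall v, U v -> exists (s : seq I) (c : I -> k),
        all J s /\ v = \sum_(i <- s) c i *: b i].

(* Main.v *)
Require Import Defs.
From mathcomp Require Import all_boot all_order all_algebra.
From mathcomp Require Import finmap.
From mathcomp.multinomials Require Import monalg.
Local Open Scope ring_scope.
Import GRing.Theory.

Section Aux.
Variable k : comUnitRingType.

Lemma bar_props (a : wcomp) :
  [/\ in_Ceps (bar a) = false, eps_len (bar a) = 0%N, bar (bar a) = bar a
    & in_CNat (bar a)].
Proof.
elim: a => [|x a [h1 h2 h3 h4]] //=.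
case: x => [|x] //=.
rewrite /eps_len /bar /in_CNat /= -/(bar a). split; [done | exact: h2 | congr (_ :: _); exact: h3 | exact: h4].
Qed.

Lemma CNat_props (a : wcomp) : in_CNat a ->
  [/\ bar a = a, eps_len a = 0%N & in_CN a].
Proof.
elim: a => [|x a IH] //= /andP [hx ha]; case: (IH ha) => h1 h2 h3.
case: x hx => // x _.
by rewrite /bar /eps_len /in_CN /= -/(bar a) -/(eps_len a) h1 h2.
Qed.

Lemma J_notCNat (a : wcomp) : basis_index a -> ~~ in_CNat a.
Proof.
rewrite /basis_index /in_CN; case: a => [|x a] //=; case: x => //.
Qed.

Lemma scaleM (c : k) (a : wcomp) : c *: M k a = << c *g a >>.
Proof.
apply/malgP => b; by rewrite mcoeffZ !mcoeffU mulr_natr.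
Qed.

Lemma phi_w (v : WCQSym k) (d : {fset wcomp}) : (msupp v `<=` d)%fset ->
  phi v = \sum_(a <- d) v@_a *: phiM k a.
Proof.
move=> sub; rewrite /phi (big_fset_incl _ sub) //.
by move=> a _ /mcoeff_outdom ->; rewrite scale0r.
Qed.

Lemma phiD (u w : WCQSym k) : phi (u + w) = phi u + phi w.
Proof.
rewrite (@phi_w (u + w) (msupp u `|` msupp w)%fset) ?msuppD_le //.
rewrite (@phi_w u (msupp u `|` msupp w)%fset) ?fsubsetUl //.
rewrite (@phi_w w (msupp u `|` msupp w)%fset) ?fsubsetUr //.
by rewrite -big_split /=; apply: eq_bigr => a _; rewrite mcoeffD scalerDl.
Qed.

Lemma phiZ (c : k) (v : WCQSym k) : phi (c *: v) = c *: phi v.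
Proof.
rewrite (@phi_w (c *: v) (msupp v)) ?msuppZ_le // /phi scaler_sumr.
by apply: eq_bigr => a _; rewrite mcoeffZ scalerA.
Qed.

Lemma phi_M (a : wcomp) : phi (M k a) = phiM k a.
Proof.
rewrite /phi /M msuppU oner_eq0 big_seq_fset1 mcoeffU eqxx /= scale1r //.
Qed.

Lemma decomp (a : wcomp) :
  M k a = (if basis_index a then basis_vec k a else 0) + phiM k a.
Proof.
rewrite /basis_index /basis_vec /phiM /in_CN.
case: (boolP (in_Ceps a)) => hC /=; first by rewrite addr0.
case: (boolP (in_CNat a)) => hN /=.
  by case: (@CNat_props a hN) => -> -> _; rewrite add0r expr0 scale1r.
by rewrite -addrA exprS mulN1r scaleNr addNr addr0.
Qed.

Lemma coef_bv (a i : wcomp) : basis_index a ->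
  (basis_vec k i)@_a = (i == a)%:R.
Proof.
move=> ha; have hna := @J_notCNat a ha.
have hb : (bar i == a) = false.
  apply/negbTE/eqP => e; case: (bar_props i) => _ _ _; by rewrite e (negbTE hna).
rewrite /basis_vec /M; case: ifP => _; first by rewrite mcoeffU.
by rewrite mcoeffD mcoeffZ !mcoeffU hb mulr0 addr0.
Qed.

End Aux.

Theorem theorem3p9 (k : comUnitRingType)
    (hQ : forall n : nat, (n.+1)%:R \is a @GRing.unit k) :
  is_basis_of (@ker_phi k) basis_index (@basis_vec k).
Proof.
split.
- move=> a ha; rewrite /ker_phi /basis_vec.
  case: ifP => hC; first by rewrite phi_M /phiM /in_CN hC.
  rewrite phiD phiZ !phi_M /phiM /in_CN hC /=.
  case: (bar_props a) => -> -> -> _ /=.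
  by rewrite expr0 scale1r exprS mulN1r scaleNr addrN.
- move=> s c us alls H a ains.
  have := congr1 (mcoeff a) H; rewrite mcoeff0 raddf_sum /=.
  have ha : basis_index a by move/allP: alls => /(_ a ains).
  rewrite (bigD1_seq a) //= big1_seq ?addr0 => [|i /andP [hi _]].
    by rewrite mcoeffZ coef_bv // eqxx mulr1 => ->.
  by rewrite mcoeffZ coef_bv // (negbTE hi) mulr0.
- move=> v /eqP hv.
  exists [seq a <- msupp v | basis_index a], (fun a => v@_a); split.
    exact: filter_all.
  rewrite big_filter big_mkcond /=.
  rewrite {1}(monalgE v).
  transitivity (\sum_(a <- msupp v) v@_a *: M k a).
    by apply: eq_bigr => a _; rewrite scaleM.
  transitivity (\sum_(a <- msupp v) v@_a *: (if basis_index a then basis_vec k a else 0) + phi v).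
    rewrite /phi -big_split /=; apply: eq_bigr => a _.
    by rewrite -scalerDr -decomp.
  rewrite hv addr0; apply: eq_bigr => a _.
  by case: ifP => _ //; rewrite scaler0.
Qed.
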